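(* Let $R$ be a DT ring. Then: (1) $er-re\in\Delta(R)$ for every idempotent $e\in R$ and every $r\in R$; (2) $fd+df\in\Delta(R)$ and $fd-df\in\Delta(R)$ for every $f\in\mathrm{Tr}(R)$ and every $d\in\Delta(R)$.
   Context: All rings are associative with identity; $U(R)$ is the group of units. $\Delta(R)=\{x\in R: x+u\in U(R)\text{ for all }u\in U(R)\}$. $\mathrm{Tr}(R)=\{x\in R: x^3=x\}$. A ring $R$ is a DT ring if every $r\in R$ can be written $r=e+d$ with $e\in\mathrm{Tr}(R)$ and $d\in\Delta(R)$. *)

(* Defs.v *)
From mathcomp Require Import all_boot all_algebra.
Set Implicit Arguments. Unset Strict Implicit. Unset Printing Implicit Defensive.
Import GRing.Theory.
Local Open Scope ring_scope.

Definition Delta (R : unitRingType) (x : R) : Prop :=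
  forall u : R, u \is a GRing.unit -> (x + u) \is a GRing.unit.

Definition Tr (R : unitRingType) (x : R) : Prop := x ^+ 3 = x.

Definition DT_ring (R : unitRingType) : Prop :=
  forall r : R, exists e d : R, [/\ Tr e, Delta d & r = e + d].

(* Main.v *)
Require Import Defs.
From mathcomp Require Import all_boot all_algebra.
Import GRing.Theory.
Local Open Scope ring_scope.

Section Aux.
Variable R : unitRingType.
Implicit Types x y d b v : R.

Lemma DeltaD x y : Delta x -> Delta y -> Delta (x + y).
Proof. move=> hx hy u hu; rewrite -addrA; apply: hx; exact: hy. Qed.

Lemma DeltaN x : Delta x -> Delta (- x).
Proof.
move=> hx u hu; have h : - (x + - u) = - x + u by rewrite opprD opprK.
by rewrite -h unitrN; apply: hx; rewrite unitrN.
Qed.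

Lemma DeltaB x y : Delta x -> Delta y -> Delta (x - y).
Proof. by move=> hx hy; apply: DeltaD => //; apply: DeltaN. Qed.

Lemma Delta_mull v x : v \is a GRing.unit -> Delta x -> Delta (v * x).
Proof.
move=> hv hx u hu.
have -> : v * x + u = v * (x + v^-1 * u) by rewrite mulrDr (mulVKr hv).
by rewrite unitrMr //; apply: hx; rewrite unitrMl // unitrV.
Qed.

Lemma Delta_mulr v x : v \is a GRing.unit -> Delta x -> Delta (x * v).
Proof.
move=> hv hx u hu.
have -> : x * v + u = (x + u * v^-1) * v by rewrite mulrDl (divrK hv).
by rewrite unitrMl //; apply: hx; rewrite unitrMr // unitrV.
Qed.

Definition P x := forall d, Delta d -> Delta (x * d) /\ Delta (d * x).

Lemma P_unit (v : R) : v \is a GRing.unit -> P v.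
Proof. by move=> hv d hd; split; [apply: Delta_mull | apply: Delta_mulr]. Qed.

Lemma P_sub x y : P x -> P y -> P (x - y).
Proof.
move=> hx hy d hd; have [h1 h2] := hx d hd; have [h3 h4] := hy d hd.
by rewrite mulrBl mulrBr; split; apply: DeltaB.
Qed.

Lemma P_Delta d : Delta d -> P d.
Proof.
move=> hd; have -> : d = (d + 1) - 1 by rewrite addrK.
by apply: P_sub; apply: P_unit; [apply: hd; exact: unitr1 | exact: unitr1].
Qed.

Lemma P_sqz b : b * b = 0 -> P b.
Proof.
move=> hb.
have hu : (1 + b) \is a GRing.unit.
  apply/unitrP; exists (1 - b).
  rewrite mulrBr mulrBl !mulrDl !mulrDr !mulr1 !mul1r hb.
  split.
  - by rewrite addr0 addrK.
  - by rewrite addr0 addrK.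
have -> : b = (1 + b) - 1 by rewrite [1 + b]addrC addrK.
exact: (P_sub _ _ (P_unit _ hu) (P_unit _ (unitr1 R))).
Qed.

Lemma sqz_Delta b : DT_ring R -> b * b = 0 -> Delta b.
Proof.
move=> hR hb; have [f [d [hf hd hbe]]] := hR b.
have Pb : P b by apply: P_sqz.
have Pd : P d by apply: P_Delta.
have ef : f = b - d by rewrite hbe addrK.
have Pf : P f by rewrite ef; apply: P_sub.
have hff : Delta (f * f).
  rewrite ef mulrBl !mulrBr hb sub0r.
  apply: DeltaB; first exact: DeltaN (Pb d hd).1.
  apply: DeltaB; first exact: (Pb d hd).2.
  exact: (Pd d hd).1.
have Df : Delta f by rewrite -hf exprS expr2; exact: (Pf _ hff).1.
by rewrite hbe; apply: DeltaD.
Qed.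

Lemma idem_comm (h : R) : h * h = h ->
  [/\ h * (1 - h) = 0, (1 - h) * h = 0 & (1 - h) * (1 - h) = 1 - h].
Proof.
move=> hh; rewrite mulrBr mulrBl mulr1 mul1r hh subrr; split => //.
by rewrite mulrBl mul1r mulrBr mulr1 hh subrr subr0.
Qed.

Lemma part1 (e r : R) : DT_ring R -> e * e = e -> Delta (e * r - r * e).
Proof.
move=> hR he; have [h1 h2 h3] := idem_comm _ he.
have -> : e * r - r * e = e * r * (1 - e) - (1 - e) * r * e.
  rewrite mulrBr mulr1 !mulrBl mul1r.
  by rewrite opprB addrA subrK.
apply: DeltaB; apply: sqz_Delta => //.
  by rewrite !mulrA -(mulrA (e * r) (1 - e) e) h2 mulr0 !mul0r.
by rewrite !mulrA -(mulrA ((1 - e) * r) e (1 - e)) h1 mulr0 !mul0r.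
Qed.

End Aux.

Theorem lemma2p6 (R : unitRingType) (hR : DT_ring R) :
  (forall e r : R, e * e = e -> Delta (e * r - r * e)) /\
  (forall f d : R, Tr f -> Delta d ->
     Delta (f * d + d * f) /\ Delta (f * d - d * f)).
Proof.
split; first by move=> e r he; apply: part1.
move=> f d hf hd.
have f3 : f * (f * f) = f by move: hf; rewrite /Tr exprS expr2.
pose h := 1 - f * f.
have hdef : h = 1 - f * f by [].
clearbody h.
have hh : h * h = h.
  rewrite hdef mulrBr mulr1 !mulrBl mul1r -(mulrA f f (f * f)) f3.
  by rewrite subrr subr0.
have fh : f * h = 0 by rewrite hdef mulrBr mulr1 f3 subrr.
have hf' : h * f = 0 by rewrite hdef mulrBl mul1r -mulrA f3 subrr.
have gu : (f + h) \is a GRing.unit.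
  apply/unitrP; exists (f + h).
  have e : (f + h) * (f + h) = 1.
    by rewrite mulrDl !mulrDr fh hf' hh addr0 add0r hdef addrC subrK.
  by split.
have ef : f = (f + h) - h by rewrite addrK.
have [i1 i2 i3] := idem_comm _ _ hh.
pose w := h - (1 - h).
have wdef : w = h - (1 - h) by [].
clearbody w.
have wu : w \is a GRing.unit.
  apply/unitrP; exists w.
  have e : w * w = 1.
    by rewrite wdef mulrBl (mulrBr h h (1 - h)) (mulrBr (1 - h) h (1 - h)) hh i1 i2 i3 subr0 sub0r opprK addrC subrK.
  by split.
have Dh : Delta (h * d - d * h) by apply: part1.
have Pg := P_unit _ _ gu; have Pw := P_unit _ _ wu.
have [Dgd Ddg] := Pg d hd.
have [Dwd _] := Pw d hd.
have E : w * d + d = h * d + h * d.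
  by rewrite wdef mulrBl (mulrBl d 1 h) mul1r opprB addrA subrK.
have F : h * d + h * d - (h * d - d * h) = h * d + d * h.
  by rewrite opprB -addrA [h * d + (_ - _)]addrC subrK.
rewrite ef !mulrBl !mulrBr.
move: Dgd Ddg; move: (f + h) => g Dgd Ddg; split.
  have -> : g * d - h * d + (d * g - d * h)
      = (g * d + d * g) - ((w * d + d) - (h * d - d * h)).
    by rewrite E F addrACA opprD.
  apply: DeltaB; first exact: DeltaD.
  apply: DeltaB => //; exact: DeltaD.
have -> : g * d - h * d - (d * g - d * h) = (g * d - d * g) - (h * d - d * h).
  by rewrite !opprB addrACA [RHS]addrACA [- (h * d) - _]addrC.
by apply: DeltaB => //; apply: DeltaB.
Qed.
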